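(* Let $\bar L:=2\max_{i=1,2}\frac{\|A_i\|^2}{\sigma_i}$ and consider the following iteration (Algorithm 1). Set $\tau_0:=0.499$, $\beta_1^0=\beta_2^0:=\sqrt{\bar L}$, $\bar y^0:=\frac{1}{\beta_2^0}(Ax^c-b)$, $\bar x^0:=P(x^c;\beta_2^0)$. For $k=0,1,2,\dots$: set $\beta_2^{k+1}:=(1-\tau_k)\beta_2^k$; compute $$\hat x^k:=(1-\tau_k)\bar x^k+\tau_kx^*(\bar y^k;\beta_1^k),\quad \bar y^{k+1}:=(1-\tau_k)\bar y^k+\tau_ky^*(\hat x^k;\beta_2^{k+1}),\quad \bar x^{k+1}:=P(\hat x^k;\beta_2^{k+1});$$ set $\beta_1^{k+1}:=(1-\tau_k)\beta_1^k$ and $\tau_{k+1}:=\frac{\tau_k}{\tau_k+1}$. Then for all $k\ge0$ and any $y^*\in Y^*$, $$\phi(\bar x^k)-d(\bar y^k)\le\frac{\sqrt{\bar L}(D_1+D_2)}{0.499k+1},\qquad \|A\bar x^k-b\|\le\frac{\sqrt{\bar L}}{0.499k+1}\Big[\|y^*\|+\sqrt{\|y^*\|^2+2(D_1+D_2)}\Big].$$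
   Context: All spaces carry the Euclidean inner product and norm $\|\cdot\|$; for a matrix, $\|\cdot\|$ is the induced operator norm. For $i=1,2$: $X_i\subset\mathbb{R}^{n_i}$ is nonempty, closed, convex and bounded; $\phi_i:\mathbb{R}^{n_i}\to\mathbb{R}$ is convex; $A_i\in\mathbb{R}^{m\times n_i}$; $b\in\mathbb{R}^m$. Write $x=(x_1,x_2)$, $X=X_1\times X_2$, $A=[A_1,A_2]$ (so $Ax=A_1x_1+A_2x_2$), $\phi(x)=\phi_1(x_1)+\phi_2(x_2)$. The primal problem is $\min\{\phi(x): x\in X,\ Ax=b\}$; standing assumption: its solution set is nonempty and either some $x\in\mathrm{ri}(X)$ satisfies $Ax=b$ or $X_1,X_2$ are polyhedral. The dual function is $d(y)=\min_{x\in X}\{\phi(x)+y^T(Ax-b)\}$ and $Y^*\neq\emptyset$ is the set of maximizers of $d$ on $\mathbb{R}^m$. For $i=1,2$, $p_i$ is a prox-function of $X_i$: continuous and strongly convex on $X_i$ with convexity parameter $\sigma_i>0$, with prox-center $x_i^c=\arg\min_{x_i\in X_i}p_i(x_i)$ normalized so $p_i(x_i^c)=0$, and $D_i:=\max_{x_i\in X_i}p_i(x_i)$; $x^c=(x_1^c,x_2^c)$. For $\beta_1>0$, $x^*(y;\beta_1)$ denotes the (unique) minimizer over $x\in X$ of $\phi(x)+y^T(Ax-b)+\beta_1(p_1(x_1)+p_2(x_2))$. For $\beta_2>0$, $y^*(x;\beta_2):=\frac{1}{\beta_2}(Ax-b)$. With $L_i^\psi(\beta_2):=\frac{2\|A_i\|^2}{\beta_2}$,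 the proximal mapping is $P_i(\hat x;\beta_2):=\arg\min_{x_i\in X_i}\{\phi_i(x_i)+y^*(\hat x;\beta_2)^TA_i(x_i-\hat x_i)+\frac{L_i^\psi(\beta_2)}{2}\|x_i-\hat x_i\|^2\}$ for $\hat x=(\hat x_1,\hat x_2)$, and $P(\hat x;\beta_2):=(P_1(\hat x;\beta_2),P_2(\hat x;\beta_2))$. *)

(* Defs.v *)
From mathcomp Require Import ssreflect ssrbool ssrnat eqtype fintype bigop.
From Stdlib Require Import Reals List ClassicalEpsilon.
Open Scope R_scope.

Definition vec (n : nat) := 'I_n -> R.
Definition vsum (n : nat) (f : 'I_n -> R) : R := \big[Rplus/0%R]_(i < n) f i.
Definition vadd {n} (u v : vec n) : vec n := fun i => u i + v i.
Definition vsub {n} (u v : vec n) : vec n := fun i => u i - v i.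
Definition vscale {n} (a : R) (u : vec n) : vec n := fun i => a * u i.
Definition dot {n} (u v : vec n) : R := vsum n (fun i => u i * v i).
Definition vnorm {n} (u : vec n) : R := sqrt (dot u u).

Definition mat (m n : nat) := 'I_m -> 'I_n -> R.
Definition mv {m n} (A : mat m n) (x : vec n) : vec m :=
  fun i => vsum n (fun j => A i j * x j).

Definition opnorm_set {m n} (A : mat m n) (r : R) : Prop :=
  exists x : vec n, vnorm x <= 1 /\ r = vnorm (mv A x).
Definition opnorm {m n} (A : mat m n) : R :=
  epsilon (inhabits 0) (fun v => is_lub (opnorm_set A) v).

Definition nonempty_set {n} (X : vec n -> Prop) := exists x, X x.
Definition closed_vset {n} (X : vec n -> Prop) :=
  forall x, (forall eps, eps > 0 -> exists y, X y /\ vnorm (vsub x y) < eps) -> X x.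
Definition convex_set {n} (X : vec n -> Prop) :=
  forall x y t, X x -> X y -> 0 <= t <= 1 ->
    X (vadd (vscale t x) (vscale (1 - t) y)).
Definition bounded_set {n} (X : vec n -> Prop) :=
  exists M, forall x, X x -> vnorm x <= M.
Definition convex_fun {n} (f : vec n -> R) :=
  forall x y t, 0 <= t <= 1 ->
    f (vadd (vscale t x) (vscale (1 - t) y)) <= t * f x + (1 - t) * f y.
Definition continuous_on {n} (X : vec n -> Prop) (f : vec n -> R) :=
  forall x, X x -> forall eps, eps > 0 -> exists delta, delta > 0 /\
    forall y, X y -> vnorm (vsub y x) < delta -> Rabs (f y - f x) < eps.
Definition strongly_convex_on {n} (X : vec n -> Prop) (sigma : R) (f : vec n -> R) :=
  forall x y t, X x -> X y -> 0 <= t <= 1 ->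
    f (vadd (vscale t x) (vscale (1 - t) y))
      <= t * f x + (1 - t) * f y - sigma / 2 * t * (1 - t) * (vnorm (vsub x y)) ^ 2.
Definition polyhedral {n} (X : vec n -> Prop) :=
  exists H : list (vec n * R), forall x, X x <-> (forall h, In h H -> dot (fst h) x <= snd h).

Definition is_argmin {T : Type} (X : T -> Prop) (f : T -> R) (x : T) :=
  X x /\ forall z, X z -> f x <= f z.
Definition is_min_value {T : Type} (X : T -> Prop) (f : T -> R) (v : R) :=
  (exists x, X x /\ f x = v) /\ forall z, X z -> v <= f z.
Definition is_max_value {T : Type} (X : T -> Prop) (f : T -> R) (v : R) :=
  (exists x, X x /\ f x = v) /\ forall z, X z -> f z <= v.

Definition pvec (n1 n2 : nat) := (vec n1 * vec n2)%type.
Definition padd {n1 n2} (x z : pvec n1 n2) : pvec n1 n2 :=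
  (vadd (fst x) (fst z), vadd (snd x) (snd z)).
Definition pscale {n1 n2} (a : R) (x : pvec n1 n2) : pvec n1 n2 :=
  (vscale a (fst x), vscale a (snd x)).
Definition pnorm {n1 n2} (x : pvec n1 n2) : R :=
  sqrt (dot (fst x) (fst x) + dot (snd x) (snd x)).
Definition psub {n1 n2} (x z : pvec n1 n2) : pvec n1 n2 :=
  (vsub (fst x) (fst z), vsub (snd x) (snd z)).
Definition pzero n1 n2 : pvec n1 n2 := (fun _ => 0, fun _ => 0).
Definition pset {n1 n2} (X1 : vec n1 -> Prop) (X2 : vec n2 -> Prop) (x : pvec n1 n2) :=
  X1 (fst x) /\ X2 (snd x).

Definition affine_comb {n1 n2} (l : list (R * pvec n1 n2)) : pvec n1 n2 :=
  fold_right (fun p acc => padd (pscale (fst p) (snd p)) acc) (pzero n1 n2) l.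
Definition in_aff {n1 n2} (C : pvec n1 n2 -> Prop) (z : pvec n1 n2) :=
  exists l : list (R * pvec n1 n2),
    (forall p, In p l -> C (snd p)) /\
    fold_right (fun p s => fst p + s) 0 l = 1 /\ z = affine_comb l.
Definition in_ri {n1 n2} (C : pvec n1 n2 -> Prop) (x : pvec n1 n2) :=
  C x /\ exists eps, eps > 0 /\
    forall z, in_aff C z -> pnorm (psub z x) < eps -> C z.

(* A x - b with A = [A1, A2] *)
Definition resid {m n1 n2} (A1 : mat m n1) (A2 : mat m n2) (b : vec m) (x : pvec n1 n2) : vec m :=
  vsub (vadd (mv A1 (fst x)) (mv A2 (snd x))) b.
Definition phi {n1 n2} (phi1 : vec n1 -> R) (phi2 : vec n2 -> R) (x : pvec n1 n2) : R :=
  phi1 (fst x) + phi2 (snd x).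
Definition lagr {m n1 n2} (phi1 : vec n1 -> R) (phi2 : vec n2 -> R)
  (A1 : mat m n1) (A2 : mat m n2) (b : vec m) (y : vec m) (x : pvec n1 n2) : R :=
  phi phi1 phi2 x + dot y (resid A1 A2 b x).
Definition ystar_map {m n1 n2} (A1 : mat m n1) (A2 : mat m n2) (b : vec m)
  (x : pvec n1 n2) (beta2 : R) : vec m :=
  vscale (1 / beta2) (resid A1 A2 b x).
Definition Lpsi {m ni} (Ai : mat m ni) (beta2 : R) : R := 2 * (opnorm Ai) ^ 2 / beta2.
Definition prox_obj {m ni n1 n2} (phii : vec ni -> R) (Ai : mat m ni)
  (A1 : mat m n1) (A2 : mat m n2) (b : vec m)
  (xhat : pvec n1 n2) (xhati : vec ni) (beta2 : R) (u : vec ni) : R :=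
  phii u + dot (ystar_map A1 A2 b xhat beta2) (mv Ai (vsub u xhati))
  + Lpsi Ai beta2 / 2 * (vnorm (vsub u xhati)) ^ 2.
Definition is_prox {m n1 n2} (X1 : vec n1 -> Prop) (X2 : vec n2 -> Prop)
  (phi1 : vec n1 -> R) (phi2 : vec n2 -> R) (A1 : mat m n1) (A2 : mat m n2) (b : vec m)
  (xhat : pvec n1 n2) (beta2 : R) (xbar : pvec n1 n2) : Prop :=
  is_argmin X1 (prox_obj phi1 A1 A1 A2 b xhat (fst xhat) beta2) (fst xbar) /\
  is_argmin X2 (prox_obj phi2 A2 A1 A2 b xhat (snd xhat) beta2) (snd xbar).

Fixpoint tau (k : nat) : R :=
  match k with
  | O => 499 / 1000
  | S k' => tau k' / (tau k' + 1)
  end.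
Definition Lbar {m n1 n2} (A1 : mat m n1) (A2 : mat m n2) (sigma1 sigma2 : R) : R :=
  2 * Rmax ((opnorm A1) ^ 2 / sigma1) ((opnorm A2) ^ 2 / sigma2).
Fixpoint beta1 (L : R) (k : nat) : R :=
  match k with
  | O => sqrt L
  | S k' => (1 - tau k') * beta1 L k'
  end.
Fixpoint beta2 (L : R) (k : nat) : R :=
  match k with
  | O => sqrt L
  | S k' => (1 - tau k') * beta2 L k'
  end.

(* Main.v *)
Require Import Defs.
From mathcomp Require Import ssreflect ssrbool ssrnat eqtype fintype bigop.
From Stdlib Require Import Reals List ClassicalEpsilon Lra Psatz FunctionalExtensionality.
Open Scope R_scope.

Lemma vsum_ext {n} (f g : 'I_n -> R) : (forall i, f i = g i) -> vsum n f = vsum n g.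
Proof. move=> H; rewrite /vsum; apply: eq_bigr => i _; exact: H. Qed.

Lemma vsum_add {n} (f g : 'I_n -> R) : vsum n (fun i => f i + g i) = vsum n f + vsum n g.
Proof.
rewrite /vsum; apply: (big_rec3 (fun a b c => a = b + c)); first by lra.
move=> i y1 y2 y3 _ ->; lra.
Qed.

Lemma vsum_scal {n} c (f : 'I_n -> R) : vsum n (fun i => c * f i) = c * vsum n f.
Proof.
rewrite /vsum; apply: (big_rec2 (fun a b => a = c * b)); first by lra.
move=> i y1 y2 _ ->; lra.
Qed.

Lemma vsum_le {n} (f g : 'I_n -> R) : (forall i, f i <= g i) -> vsum n f <= vsum n g.
Proof.
move=> H; rewrite /vsum; apply: (big_rec2 (fun a b => a <= b)); first by lra.
move=> i y1 y2 _ Hy; have := H i; lra.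
Qed.

Lemma vsum_0 n : vsum n (fun _ => 0) = 0.
Proof.
rewrite /vsum; apply: (big_rec (fun a => a = 0)) => // i y _ ->; lra.
Qed.

Lemma vsum_opp {n} (f : 'I_n -> R) : vsum n (fun i => - f i) = - vsum n f.
Proof. rewrite (vsum_ext _ (fun i => -1 * f i)); [rewrite vsum_scal; lra| move=> i; lra]. Qed.

Lemma vsum_sub {n} (f g : 'I_n -> R) : vsum n (fun i => f i - g i) = vsum n f - vsum n g.
Proof.
rewrite (vsum_ext _ (fun i => f i + - g i)); last by move=> i; lra.
rewrite vsum_add vsum_opp; lra.
Qed.

Lemma vsum_nonneg {n} (f : 'I_n -> R) : (forall i, 0 <= f i) -> 0 <= vsum n f.
Proof. move=> H; have := vsum_le (fun _ => 0) f H; rewrite vsum_0; done. Qed.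

Lemma vsum_eq0 n (f : 'I_n -> R) : (forall i, f i = 0) -> vsum n f = 0.
Proof. move=> H; rewrite (vsum_ext _ _ H); exact: vsum_0. Qed.

Lemma dot_nonneg {n} (u : vec n) : 0 <= dot u u.
Proof. apply: vsum_nonneg => i; cbv beta; nra. Qed.

Lemma vnorm_sq {n} (u : vec n) : vnorm u ^ 2 = dot u u.
Proof. rewrite /vnorm /= Rmult_1_r sqrt_sqrt //; exact: dot_nonneg. Qed.

Lemma dot_comm {n} (u v : vec n) : dot u v = dot v u.
Proof. apply: vsum_ext => i; lra. Qed.

Lemma dot_scale_l {n} c (u v : vec n) : dot (vscale c u) v = c * dot u v.
Proof. rewrite /dot -vsum_scal; apply: vsum_ext => i; rewrite /vscale; lra. Qed.

Lemma cs_sq {n} (u v : vec n) : dot u v * dot u v <= dot u u * dot v v.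
Proof.
have Hq : forall l, 0 <= dot u u * l * l - 2 * dot u v * l + dot v v.
  move=> l.
  have -> : dot u u * l * l - 2 * dot u v * l + dot v v =
            vsum n (fun i => (u i * l - v i) * (u i * l - v i)).
    rewrite /dot (vsum_ext (fun i => (u i * l - v i) * (u i * l - v i))
                  (fun i => ((l * l) * (u i * u i) + (-2 * l) * (u i * v i)) + v i * v i)).
      rewrite !vsum_add !vsum_scal; lra.
    move=> i; ring.
  apply: vsum_nonneg => i; cbv beta; have := Rle_0_sqr (u i * l - v i); rewrite /Rsqr; lra.
have Hu := dot_nonneg u; have Hv := dot_nonneg v.
have Hsq : dot u v * dot u v <= dot u u * dot v v.
  case: (Rle_lt_or_eq_dec 0 (dot u u) Hu) => Hpos.
  - have := Hq (dot u v / dot u u).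
    have -> : dot u u * (dot u v / dot u u) * (dot u v / dot u u)
       - 2 * dot u v * (dot u v / dot u u) + dot v v
       = (dot u u * dot v v - dot u v * dot u v) / dot u u by field; lra.
    move=> H.
    have : 0 <= (dot u u * dot v v - dot u v * dot u v) / dot u u * dot u u by nra.
    rewrite /Rdiv Rmult_assoc Rinv_l; lra.
  - rewrite -Hpos in Hq *.
    case: (Req_dec (dot u v) 0) => H0; first by rewrite H0; lra.
    have := Hq ((dot v v + 1) / (2 * dot u v)).
    have -> : 0 * ((dot v v + 1) / (2 * dot u v)) * ((dot v v + 1) / (2 * dot u v)) -
      2 * dot u v * ((dot v v + 1) / (2 * dot u v)) + dot v v = -1 by field.
    lra.
exact Hsq.
Qed.

Lemma cauchy_schwarz {n} (u v : vec n) : dot u v <= vnorm u * vnorm v.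
Proof.
have Hu := dot_nonneg u; have Hv := dot_nonneg v.
have Hsq := cs_sq u v.
rewrite /vnorm -sqrt_mult //.
case: (Rle_or_lt (dot u v) 0) => H; first by have := sqrt_pos (dot u u * dot v v); lra.
rewrite -(sqrt_Rsqr (dot u v)); last lra.
apply: sqrt_le_1_alt; rewrite /Rsqr; lra.
Qed.
Lemma mv_sub {m n} (A : mat m n) (u v : vec n) i :
  mv A (vsub u v) i = mv A u i - mv A v i.
Proof. rewrite /mv -vsum_sub; apply: vsum_ext => j; rewrite /vsub; ring. Qed.

Lemma mv_comb {m n} (A : mat m n) t s (u v : vec n) i :
  mv A (vadd (vscale t u) (vscale s v)) i = t * mv A u i + s * mv A v i.
Proof. rewrite /mv -!vsum_scal -vsum_add; apply: vsum_ext => j; rewrite /vadd /vscale; ring. Qed.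

Lemma mv_scale {m n} (A : mat m n) c (u : vec n) i :
  mv A (vscale c u) i = c * mv A u i.
Proof. rewrite /mv -vsum_scal; apply: vsum_ext => j; rewrite /vscale; ring. Qed.

Lemma dot_scale2 {n} c (u : vec n) : dot (vscale c u) (vscale c u) = c * c * dot u u.
Proof. rewrite /dot -vsum_scal; apply: vsum_ext => j; rewrite /vscale; ring. Qed.

Lemma vnorm_scale {n} c (u : vec n) : vnorm (vscale c u) = Rabs c * vnorm u.
Proof.
rewrite /vnorm dot_scale2 sqrt_mult; [|nra|exact: dot_nonneg].
by rewrite -/(Rsqr c) sqrt_Rsqr_abs.
Qed.

Lemma vnorm_zero n : vnorm (fun _ : 'I_n => 0) = 0.
Proof. rewrite /vnorm /dot (vsum_ext _ (fun _ => 0)); [by rewrite vsum_0 sqrt_0| move=> i; ring]. Qed.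

Lemma opnorm_spec {m n} (A : mat m n) :
  is_lub (opnorm_set A) (opnorm A).
Proof.
rewrite /opnorm; apply: epsilon_spec.
set S := vsum m (fun i => dot (A i) (A i)).
have HS : 0 <= S by apply: vsum_nonneg => i; exact: dot_nonneg.
have Hb : bound (opnorm_set A).
  exists (sqrt S) => r [x [Hx ->]].
  have Hxx : dot x x <= 1.
    rewrite -vnorm_sq; have := sqrt_pos (dot x x); rewrite -/(vnorm x) => H0; nra.
  apply: sqrt_le_1_alt.
  apply: (Rle_trans _ (S * dot x x)); last by nra.
  have -> : S * dot x x = vsum m (fun i => dot x x * dot (A i) (A i)) by rewrite vsum_scal /S; ring.
  apply: vsum_le => i.
  have := cs_sq (A i) x. rewrite /mv -/(dot (A i) x). lra.
have Hne : exists r, opnorm_set A r.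
  exists (vnorm (mv A (fun _ => 0))); exists (fun _ => 0); split => //.
  rewrite vnorm_zero; lra.
have [v Hv] := completeness _ Hb Hne.
by exists v.
Qed.

Lemma opnorm_nonneg {m n} (A : mat m n) : 0 <= opnorm A.
Proof.
have [Hub _] := opnorm_spec A.
apply: (Rle_trans _ (vnorm (mv A (fun _ => 0)))); first exact: sqrt_pos.
apply: Hub; exists (fun _ => 0); split => //; rewrite vnorm_zero; lra.
Qed.

Lemma opnorm_bound_norm {m n} (A : mat m n) (x : vec n) :
  vnorm (mv A x) <= opnorm A * vnorm x.
Proof.
have [Hub _] := opnorm_spec A.
have Hop := opnorm_nonneg A.
have Hx := sqrt_pos (dot x x); rewrite -/(vnorm x) in Hx.
apply: Rnot_lt_le => Hlt.
set e := (vnorm (mv A x) - opnorm A * vnorm x) / (2 * (opnorm A + 1)).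
have He : 0 < e by apply: Rdiv_lt_0_compat; lra.
set s := vnorm x + e.
have Hs : 0 < s by rewrite /s; lra.
have H1 : opnorm_set A (vnorm (mv A (vscale (/ s) x))).
  exists (vscale (/ s) x); split => //.
  rewrite vnorm_scale Rabs_right; last by apply: Rle_ge; apply: Rlt_le; apply: Rinv_0_lt_compat.
  apply: (Rmult_le_reg_l s) => //. rewrite -Rmult_assoc Rinv_r; [rewrite /s; lra| lra].
have H2 := Hub _ H1.
have Hm : mv A (vscale (/ s) x) = vscale (/ s) (mv A x).
  apply: functional_extensionality => i; by rewrite mv_scale.
rewrite Hm vnorm_scale Rabs_right in H2; last by apply: Rle_ge; apply: Rlt_le; apply: Rinv_0_lt_compat.
have H3 : vnorm (mv A x) <= opnorm A * s.
  apply: (Rmult_le_reg_l (/ s)); first exact: Rinv_0_lt_compat.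
  rewrite (Rmult_comm (opnorm A)) -Rmult_assoc Rinv_l; lra.
rewrite /s in H3.
have : opnorm A * e < 2 * (opnorm A + 1) * e by nra.
have : 2 * (opnorm A + 1) * e = vnorm (mv A x) - opnorm A * vnorm x.
  rewrite /e; field; lra.
nra.
Qed.

Lemma opnorm_bound {m n} (A : mat m n) (x : vec n) :
  dot (mv A x) (mv A x) <= opnorm A ^ 2 * dot x x.
Proof.
rewrite -!vnorm_sq.
have H := opnorm_bound_norm A x.
have H0 := sqrt_pos (dot (mv A x) (mv A x)); rewrite -/(vnorm (mv A x)) in H0.
have := opnorm_nonneg A; have := sqrt_pos (dot x x); rewrite -/(vnorm x) => ? ?.
have -> : opnorm A ^ 2 * vnorm x ^ 2 = (opnorm A * vnorm x) ^ 2 by ring.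
apply: pow_incr; lra.
Qed.

Lemma resid_comb {m n1 n2} (A1 : mat m n1) (A2 : mat m n2) b t s (x z : pvec n1 n2) i :
  t + s = 1 ->
  resid A1 A2 b (padd (pscale t x) (pscale s z)) i = t * resid A1 A2 b x i + s * resid A1 A2 b z i.
Proof.
move=> Hts; rewrite /resid /padd /pscale /= /vsub /vadd.
rewrite (mv_comb A1) (mv_comb A2).
have -> : s = 1 - t by lra.
ring.
Qed.

Lemma resid_diff {m n1 n2} (A1 : mat m n1) (A2 : mat m n2) b (u v : pvec n1 n2) i :
  resid A1 A2 b u i - resid A1 A2 b v i =
  mv A1 (vsub (fst u) (fst v)) i + mv A2 (vsub (snd u) (snd v)) i.
Proof. rewrite /resid /vsub /vadd !mv_sub /vsub. ring. Qed.

Lemma lagr_convex {m n1 n2} (phi1 : vec n1 -> R) (phi2 : vec n2 -> R)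
  (A1 : mat m n1) (A2 : mat m n2) b y :
  convex_fun phi1 -> convex_fun phi2 ->
  forall x z t, 0 <= t <= 1 ->
  lagr phi1 phi2 A1 A2 b y (padd (pscale t x) (pscale (1 - t) z))
    <= t * lagr phi1 phi2 A1 A2 b y x + (1 - t) * lagr phi1 phi2 A1 A2 b y z.
Proof.
move=> H1 H2 x z t Ht.
rewrite /lagr /phi.
have E : dot y (resid A1 A2 b (padd (pscale t x) (pscale (1 - t) z)))
   = t * dot y (resid A1 A2 b x) + (1 - t) * dot y (resid A1 A2 b z).
  rewrite /dot -!vsum_scal -vsum_add; apply: vsum_ext => i.
  rewrite resid_comb; [ring|ring].
rewrite E.
have := H1 (fst x) (fst z) t Ht; have := H2 (snd x) (snd z) t Ht.
rewrite /padd /pscale /=. lra.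
Qed.

Lemma growth {n1 n2} (X1 : vec n1 -> Prop) (X2 : vec n2 -> Prop) p1 p2 s1 s2
  (F : pvec n1 n2 -> R) beta xm :
  convex_set X1 -> convex_set X2 ->
  strongly_convex_on X1 s1 p1 -> strongly_convex_on X2 s2 p2 ->
  (forall x z t, pset X1 X2 x -> pset X1 X2 z -> 0 <= t <= 1 ->
     F (padd (pscale t x) (pscale (1 - t) z)) <= t * F x + (1 - t) * F z) ->
  0 <= beta ->
  is_argmin (pset X1 X2) (fun x => F x + beta * (p1 (fst x) + p2 (snd x))) xm ->
  forall x, pset X1 X2 x ->
  F xm + beta * (p1 (fst xm) + p2 (snd xm))
   + beta * (s1 / 2 * vnorm (vsub (fst x) (fst xm)) ^ 2
             + s2 / 2 * vnorm (vsub (snd x) (snd xm)) ^ 2)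
   <= F x + beta * (p1 (fst x) + p2 (snd x)).
Proof.
move=> C1 C2 S1 S2 HF Hb [Hxm Hmin] x Hx.
set Q := s1 / 2 * vnorm (vsub (fst x) (fst xm)) ^ 2 + s2 / 2 * vnorm (vsub (snd x) (snd xm)) ^ 2.
set Gx := F x + beta * (p1 (fst x) + p2 (snd x)).
set Gm := F xm + beta * (p1 (fst xm) + p2 (snd xm)).
have HD : Gm <= Gx by exact: Hmin.
have Ht : forall t, 0 < t <= 1 -> beta * (1 - t) * Q <= Gx - Gm.
  move=> t Ht.
  have Ht' : 0 <= t <= 1 by lra.
  set z := padd (pscale t x) (pscale (1 - t) xm).
  have Hz : pset X1 X2 z.
    case: Hx => Hx1 Hx2; case: Hxm => Hm1 Hm2.
    split; rewrite /z /padd /pscale /=; [exact: C1|exact: C2].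
  have Hmz := Hmin z Hz; simpl in Hmz.
  have HFz := HF x xm t Hx Hxm Ht'.
  case: Hx => Hx1 Hx2; case: Hxm => Hm1 Hm2.
  have Hp1 := S1 _ _ t Hx1 Hm1 Ht'.
  have Hp2 := S2 _ _ t Hx2 Hm2 Ht'.
  rewrite /z /padd /pscale /= in Hmz HFz.
  have Hsum : p1 (vadd (vscale t (fst x)) (vscale (1 - t) (fst xm))) +
              p2 (vadd (vscale t (snd x)) (vscale (1 - t) (snd xm)))
     <= t * (p1 (fst x) + p2 (snd x)) + (1 - t) * (p1 (fst xm) + p2 (snd xm)) - t * (1 - t) * Q.
    rewrite /Q; lra.
  have Hbs := Rmult_le_compat_l beta _ _ Hb Hsum.
  have : t * (beta * (1 - t) * Q) <= t * (Gx - Gm) by rewrite /Gx /Gm; lra.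
  move=> H; apply: (Rmult_le_reg_l t); lra.
apply: Rnot_lt_le => Hlt.
have HQ : 0 < beta * Q by lra.
set t := (beta * Q - (Gx - Gm)) / (2 * (beta * Q)).
have Ht1 : 0 < t <= 1.
  rewrite /t; split; first by apply: Rdiv_lt_0_compat; lra.
  apply: (Rmult_le_reg_r (2 * (beta * Q))); first lra.
  rewrite /Rdiv Rmult_assoc Rinv_l; lra.
have := Ht t Ht1.
have -> : beta * (1 - t) * Q = beta * Q - t * (beta * Q) by ring.
have -> : t * (beta * Q) = (beta * Q - (Gx - Gm)) / 2.
  rewrite /t; field; split => H0; rewrite H0 in HQ; lra.
rewrite /Gx /Gm /Q in Hlt *. lra.
Qed.

Lemma sq_sum_le {m} (r a c : vec m) :
  dot (fun i => r i + a i + c i) (fun i => r i + a i + c i)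
  <= dot r r + 2 * dot r a + 2 * dot r c + 2 * dot a a + 2 * dot c c.
Proof.
have -> : dot r r + 2 * dot r a + 2 * dot r c + 2 * dot a a + 2 * dot c c =
  vsum m (fun i => r i * r i + 2 * (r i * a i) + 2 * (r i * c i) + 2 * (a i * a i) + 2 * (c i * c i)).
  by rewrite !vsum_add !vsum_scal.
apply: vsum_le => i; cbv beta.
have := Rle_0_sqr (a i - c i); rewrite /Rsqr; nra.
Qed.

Lemma descent {m n1 n2} (X1 : vec n1 -> Prop) (X2 : vec n2 -> Prop)
  (phi1 : vec n1 -> R) (phi2 : vec n2 -> R) (A1 : mat m n1) (A2 : mat m n2) (b : vec m)
  (xh : pvec n1 n2) (beta : R) (xb u : pvec n1 n2) :
  0 <= beta ->
  is_prox X1 X2 phi1 phi2 A1 A2 b xh beta xb -> pset X1 X2 u ->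
  phi phi1 phi2 xb + dot (resid A1 A2 b xb) (resid A1 A2 b xb) * / (2 * beta)
  <= phi phi1 phi2 u + dot (resid A1 A2 b xh) (resid A1 A2 b xh) * / (2 * beta)
     + / beta * (dot (resid A1 A2 b xh) (mv A1 (vsub (fst u) (fst xh)))
                 + dot (resid A1 A2 b xh) (mv A2 (vsub (snd u) (snd xh))))
     + / beta * (opnorm A1 ^ 2 * dot (vsub (fst u) (fst xh)) (vsub (fst u) (fst xh))
                 + opnorm A2 ^ 2 * dot (vsub (snd u) (snd xh)) (vsub (snd u) (snd xh))).
Proof.
move=> Hb [[_ P1] [_ P2]] [Hu1 Hu2].
have Hi : 0 <= / beta.
  case: (Req_dec beta 0) => H0; first by rewrite H0 Rinv_0; lra.
  apply: Rlt_le; apply: Rinv_0_lt_compat; lra.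
have P1' := P1 _ Hu1; have P2' := P2 _ Hu2.
rewrite /prox_obj /ystar_map /Lpsi !dot_scale_l !vnorm_sq in P1' P2'.
set r := resid A1 A2 b xh.
set d1 := vsub (fst xb) (fst xh); set d2 := vsub (snd xb) (snd xh).
have Hr : resid A1 A2 b xb = (fun i => r i + mv A1 d1 i + mv A2 d2 i).
  apply: functional_extensionality => i.
  have := resid_diff A1 A2 b xb xh i. rewrite -/r -/d1 -/d2. lra.
rewrite Hr.
have H1 := sq_sum_le r (mv A1 d1) (mv A2 d2).
have N1 := opnorm_bound A1 d1; have N2 := opnorm_bound A2 d2.
have Hq : dot (fun i => r i + mv A1 d1 i + mv A2 d2 i) (fun i => r i + mv A1 d1 i + mv A2 d2 i)
   <= dot r r + 2 * dot r (mv A1 d1) + 2 * dot r (mv A2 d2)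
      + 2 * (opnorm A1 ^ 2 * dot d1 d1) + 2 * (opnorm A2 ^ 2 * dot d2 d2) by lra.
have Hq2 := Rmult_le_compat_l (/ beta) _ _ Hi Hq.
rewrite Rinv_mult.
rewrite /phi.
have E1 : 1 / beta = / beta by rewrite /Rdiv Rmult_1_l.
have E2 : forall N, 2 * N / beta / 2 = N * / beta.
  move=> N; rewrite /Rdiv.
  have -> : 2 * N * / beta * / 2 = (2 * / 2) * (N * / beta) by ring.
  rewrite Rinv_r; [ring | apply: Rgt_not_eq; lra].
rewrite E1 !E2 -/r -/d1 -/d2 in P1' P2'.
nra.
Qed.

Fixpoint cc (k : nat) : R :=
  match k with
  | O => 1
  | S k' => (1 - tau k') * cc k'
  end.

Lemma tau_eq k : tau k = 499 / 1000 / (1 + 499 / 1000 * INR k).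
Proof.
elim: k => [|k IH]; first by rewrite /= ; field.
have HK := pos_INR k.
rewrite S_INR /= IH.
field; split; apply: Rgt_not_eq; lra.
Qed.

Lemma cc_eq k : cc k = 501 / 1000 / (501 / 1000 + 499 / 1000 * INR k).
Proof.
elim: k => [|k IH]; first by rewrite /= ; field.
have HK := pos_INR k.
rewrite S_INR /= IH tau_eq.
field; split; apply: Rgt_not_eq; lra.
Qed.

Lemma beta1_eq L k : beta1 L k = sqrt L * cc k.
Proof. elim: k => [|k IH] /=; [ring| rewrite IH; ring]. Qed.

Lemma beta2_eq L k : beta2 L k = sqrt L * cc k.
Proof. elim: k => [|k IH] /=; [ring| rewrite IH; ring]. Qed.

Lemma tau_bounds k : 0 < tau k < 1.
Proof.
rewrite tau_eq; have HK := pos_INR k.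
split; first by apply: Rdiv_lt_0_compat; lra.
apply: (Rmult_lt_reg_r (1 + 499 / 1000 * INR k)); first lra.
rewrite /Rdiv Rmult_assoc Rinv_l; lra.
Qed.

Lemma cc_pos k : 0 < cc k.
Proof. rewrite cc_eq; have HK := pos_INR k; apply: Rdiv_lt_0_compat; lra. Qed.

Lemma tau_cc k : tau k <= (1 - tau k) * cc k.
Proof.
rewrite cc_eq tau_eq; have HK := pos_INR k.
have -> : (1 - 499 / 1000 / (1 + 499 / 1000 * INR k)) *
  (501 / 1000 / (501 / 1000 + 499 / 1000 * INR k)) = 501 / 1000 / (1 + 499 / 1000 * INR k).
  field; split; apply: Rgt_not_eq; lra.
apply: Rmult_le_compat_r; last lra.
apply: Rlt_le; apply: Rinv_0_lt_compat; lra.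
Qed.

Lemma cc_le k : cc k <= 1 / (499 / 1000 * INR k + 1).
Proof.
rewrite cc_eq; have HK := pos_INR k.
have H1 : 0 < 501 / 1000 + 499 / 1000 * INR k by lra.
have H2 : 0 < 499 / 1000 * INR k + 1 by lra.
apply: (Rmult_le_reg_r ((501 / 1000 + 499 / 1000 * INR k) * (499 / 1000 * INR k + 1))); first nra.
have -> : 501 / 1000 / (501 / 1000 + 499 / 1000 * INR k) *
    ((501 / 1000 + 499 / 1000 * INR k) * (499 / 1000 * INR k + 1)) = 501/1000 * (499 / 1000 * INR k + 1).
  field; lra.
have -> : 1 / (499 / 1000 * INR k + 1) *
    ((501 / 1000 + 499 / 1000 * INR k) * (499 / 1000 * INR k + 1)) = 501 / 1000 + 499 / 1000 * INR k.
  field; lra.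
nra.
Qed.

Lemma quad_solve t be N D :
  0 <= t -> 0 < be -> 0 <= N -> 0 <= D ->
  t * t <= 2 * (be * be) * D + 2 * be * N * t ->
  t <= be * (N + sqrt (N ^ 2 + 2 * D)).
Proof.
move=> Ht Hb HN HD H.
have Hs0 : 0 <= N ^ 2 + 2 * D by nra.
set s := sqrt (N ^ 2 + 2 * D).
have Hs : s * s = N ^ 2 + 2 * D by rewrite /s sqrt_sqrt.
have Hsp : 0 <= s by exact: sqrt_pos.
have HsN : N <= s by nra.
apply: Rnot_lt_le => Hlt.
have H1 : 0 < t - be * (N + s) by lra.
have H2 : 0 < t - be * (N - s) by nra.
have : 0 < (t - be * (N + s)) * (t - be * (N - s)) by apply: Rmult_lt_0_compat.
have -> : (t - be * (N + s)) * (t - be * (N - s)) = t * t - 2 * be * N * t + be * be * (N * N - s * s) by ring.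
rewrite Hs. nra.
Qed.

Lemma quad_cond L N sig ta c :
  0 <= L -> 0 <= N -> 0 < sig -> 2 * N <= L * sig ->
  0 < ta < 1 -> 0 < c -> ta <= (1 - ta) * c ->
  ta * ta * (/ ((1 - ta) * (sqrt L * c)) * N) <= (1 - ta) * (sqrt L * c) * sig / 2.
Proof.
move=> HL HN Hs HNL Ht Hc Htc.
case: (Rle_lt_or_eq_dec 0 L HL) => HL0; last first.
  rewrite -HL0 in HNL *; rewrite sqrt_0.
  have -> : N = 0 by nra.
  apply: Req_le; rewrite /Rdiv; ring.
have Hq := sqrt_lt_R0 L HL0.
have HsL : sqrt L * sqrt L = L by rewrite sqrt_sqrt.
set q := sqrt L in Hq HsL *.
have Hpos : 0 < (1 - ta) * (q * c) by apply: Rmult_lt_0_compat; [lra| nra].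
have Hta2 : ta * ta <= ((1 - ta) * c) * ((1 - ta) * c) by nra.
apply: (Rmult_le_reg_l ((1 - ta) * (q * c))) => //.
have -> : (1 - ta) * (q * c) * (ta * ta * (/ ((1 - ta) * (q * c)) * N)) = ta * ta * N.
  field; repeat split; apply: Rgt_not_eq; nra.
have : ta * ta * N <= ((1 - ta) * c) * ((1 - ta) * c) * N by nra.
have : ((1 - ta) * c) * ((1 - ta) * c) * (2 * N) <= ((1 - ta) * c) * ((1 - ta) * c) * (L * sig).
  apply: Rmult_le_compat_l => //; nra.
rewrite -HsL. nra.
Qed.

Lemma base_cond L N sig :
  0 <= L -> 0 <= N -> 0 < sig -> 2 * N <= L * sig ->
  / sqrt L * N <= sqrt L * sig / 2.
Proof.
move=> HL HN Hs HNL.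
case: (Rle_lt_or_eq_dec 0 L HL) => HL0; last first.
  rewrite -HL0 in HNL *; rewrite sqrt_0.
  have -> : N = 0 by nra.
  apply: Req_le; rewrite /Rdiv; ring.
have Hq := sqrt_lt_R0 L HL0.
have HsL : sqrt L * sqrt L = L by rewrite sqrt_sqrt.
apply: (Rmult_le_reg_l (sqrt L)) => //.
rewrite -Rmult_assoc Rinv_r; last by apply: Rgt_not_eq.
have -> : sqrt L * (sqrt L * sig / 2) = (sqrt L * sqrt L) * sig / 2 by rewrite /Rdiv; ring.
rewrite HsL; lra.
Qed.

Lemma lin_split {m n1 n2} (A1 : mat m n1) (A2 : mat m n2) b (r : vec m) (u v : pvec n1 n2) :
  dot r (mv A1 (vsub (fst u) (fst v))) + dot r (mv A2 (vsub (snd u) (snd v)))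
  = dot r (resid A1 A2 b u) - dot r (resid A1 A2 b v).
Proof.
rewrite /dot -vsum_add -vsum_sub; apply: vsum_ext => i.
have := resid_diff A1 A2 b u v i; nra.
Qed.

Lemma sq_sum2 {m} (a c : vec m) :
  dot (fun i => a i + c i) (fun i => a i + c i) <= 2 * dot a a + 2 * dot c c.
Proof.
rewrite /dot -!vsum_scal -vsum_add; apply: vsum_le => i; cbv beta.
have := Rle_0_sqr (a i - c i); rewrite /Rsqr; nra.
Qed.

Lemma Rinv_nonneg x : 0 <= x -> 0 <= / x.
Proof.
move=> H; case: (Req_dec x 0) => H0; first by rewrite H0 Rinv_0; lra.
apply: Rlt_le; apply: Rinv_0_lt_compat; lra.
Qed.
Theorem theorem2
  (m n1 n2 : nat)
  (X1 : vec n1 -> Prop) (X2 : vec n2 -> Prop)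
  (phi1 : vec n1 -> R) (phi2 : vec n2 -> R)
  (A1 : mat m n1) (A2 : mat m n2) (b : vec m)
  (* X_i nonempty, closed, convex, bounded; phi_i convex *)
  (hX1ne : nonempty_set X1) (hX1cl : closed_vset X1) (hX1cv : convex_set X1) (hX1bd : bounded_set X1)
  (hX2ne : nonempty_set X2) (hX2cl : closed_vset X2) (hX2cv : convex_set X2) (hX2bd : bounded_set X2)
  (hphi1 : convex_fun phi1) (hphi2 : convex_fun phi2)
  (* standing assumption: the primal solution set is nonempty ... *)
  (hsol : exists xs : pvec n1 n2,
      is_argmin (fun x => pset X1 X2 x /\ resid A1 A2 b x = (fun _ => 0))
                (phi phi1 phi2) xs)
  (* ... and either Slater (relative interior) or polyhedral X_1, X_2 *)
  (hqual : (exists x : pvec n1 n2, in_ri (pset X1 X2) x /\ resid A1 A2 b x = (fun _ => 0))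
           \/ (polyhedral X1 /\ polyhedral X2))
  (* the dual function d(y) = min_{x in X} phi(x) + y^T (A x - b) *)
  (d : vec m -> R)
  (hd : forall y, is_min_value (pset X1 X2) (lagr phi1 phi2 A1 A2 b y) (d y))
  (* Y^* nonempty *)
  (hYne : exists y0 : vec m, forall y, d y <= d y0)
  (* prox-functions p_i with parameters sigma_i, prox-centers xc_i, D_i *)
  (p1 : vec n1 -> R) (p2 : vec n2 -> R) (sigma1 sigma2 : R)
  (xc1 : vec n1) (xc2 : vec n2) (D1 D2 : R)
  (hsig1 : sigma1 > 0) (hsig2 : sigma2 > 0)
  (hp1c : continuous_on X1 p1) (hp2c : continuous_on X2 p2)
  (hp1s : strongly_convex_on X1 sigma1 p1) (hp2s : strongly_convex_on X2 sigma2 p2)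
  (hxc1 : is_argmin X1 p1 xc1) (hxc2 : is_argmin X2 p2 xc2)
  (hp1xc : p1 xc1 = 0) (hp2xc : p2 xc2 = 0)
  (hD1 : is_max_value X1 p1 D1) (hD2 : is_max_value X2 p2 D2)
  (* iterates of Algorithm 1:
     xs k = x^*(ybar^k; beta1^k), xhat k = hat x^k *)
  (xbar : nat -> pvec n1 n2) (ybar : nat -> vec m)
  (xs : nat -> pvec n1 n2) (xhat : nat -> pvec n1 n2)
  (hy0 : ybar 0%nat = ystar_map A1 A2 b (xc1, xc2) (beta2 (Lbar A1 A2 sigma1 sigma2) 0))
  (hx0 : is_prox X1 X2 phi1 phi2 A1 A2 b (xc1, xc2)
           (beta2 (Lbar A1 A2 sigma1 sigma2) 0) (xbar 0%nat))
  (hxs : forall k, is_argmin (pset X1 X2)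
           (fun x => lagr phi1 phi2 A1 A2 b (ybar k) x
                     + beta1 (Lbar A1 A2 sigma1 sigma2) k * (p1 (fst x) + p2 (snd x)))
           (xs k))
  (hxhat : forall k, xhat k = padd (pscale (1 - tau k) (xbar k)) (pscale (tau k) (xs k)))
  (hyS : forall k, ybar (S k) =
           vadd (vscale (1 - tau k) (ybar k))
                (vscale (tau k) (ystar_map A1 A2 b (xhat k)
                                   (beta2 (Lbar A1 A2 sigma1 sigma2) (S k)))))
  (hxS : forall k, is_prox X1 X2 phi1 phi2 A1 A2 b (xhat k)
           (beta2 (Lbar A1 A2 sigma1 sigma2) (S k)) (xbar (S k))) :
  forall (k : nat) (ystar : vec m), (forall y, d y <= d ystar) ->
    phi phi1 phi2 (xbar k) - d (ybar k)
      <= sqrt (Lbar A1 A2 sigma1 sigma2) * (D1 + D2) / (499 / 1000 * INR k + 1)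
    /\ vnorm (resid A1 A2 b (xbar k))
      <= sqrt (Lbar A1 A2 sigma1 sigma2) / (499 / 1000 * INR k + 1)
         * (vnorm ystar + sqrt ((vnorm ystar) ^ 2 + 2 * (D1 + D2))).
Proof.
set L := Lbar A1 A2 sigma1 sigma2.
have HN1 : 0 <= opnorm A1 ^ 2 by apply: pow2_ge_0.
have HN2 : 0 <= opnorm A2 ^ 2 by apply: pow2_ge_0.
have HLN1 : 2 * opnorm A1 ^ 2 <= L * sigma1.
  have H := Rmax_l (opnorm A1 ^ 2 / sigma1) (opnorm A2 ^ 2 / sigma2).
  rewrite /L /Lbar.
  have E : opnorm A1 ^ 2 = opnorm A1 ^ 2 / sigma1 * sigma1 by field; lra.
  rewrite {1}E; nra.
have HLN2 : 2 * opnorm A2 ^ 2 <= L * sigma2.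
  have H := Rmax_r (opnorm A1 ^ 2 / sigma1) (opnorm A2 ^ 2 / sigma2).
  rewrite /L /Lbar.
  have E : opnorm A2 ^ 2 = opnorm A2 ^ 2 / sigma2 * sigma2 by field; lra.
  rewrite {1}E; nra.
have HL : 0 <= L.
  have H := Rmax_l (opnorm A1 ^ 2 / sigma1) (opnorm A2 ^ 2 / sigma2).
  have : 0 <= opnorm A1 ^ 2 / sigma1 by apply: Rmult_le_pos => //; apply: Rlt_le; apply: Rinv_0_lt_compat.
  rewrite /L /Lbar; lra.
have Hq : 0 <= sqrt L by apply: sqrt_pos.
set G := fun k x => lagr phi1 phi2 A1 A2 b (ybar k) x + sqrt L * cc k * (p1 (fst x) + p2 (snd x)).
have hxs' : forall k, is_argmin (pset X1 X2) (G k) (xs k).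
  move=> k; have := hxs k; by rewrite beta1_eq.
have EG : forall k, pset X1 X2 (xbar k) /\
   phi phi1 phi2 (xbar k) + dot (resid A1 A2 b (xbar k)) (resid A1 A2 b (xbar k)) * / (2 * (sqrt L * cc k))
   <= G k (xs k).
  elim => [|k [Hpk IH]].
  - have Eb0 : beta2 L 0 = sqrt L by [].
    rewrite Eb0 in hx0 hy0.
    have Hpx0 : pset X1 X2 (xbar 0%nat).
      by case: hx0 => [[H1 _] [H2 _]]; split.
    split => //.
    set xm := xs 0%nat.
    have Hxm : pset X1 X2 xm := proj1 (hxs' 0%nat).
    have Hdesc := descent X1 X2 phi1 phi2 A1 A2 b (xc1, xc2) (sqrt L) (xbar 0%nat) xm Hq hx0 Hxm.
    have HF0 : forall x z t, pset X1 X2 x -> pset X1 X2 z -> 0 <= t <= 1 ->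
       (fun _ : pvec n1 n2 => 0) (padd (pscale t x) (pscale (1 - t) z))
       <= t * (fun _ : pvec n1 n2 => 0) x + (1 - t) * (fun _ : pvec n1 n2 => 0) z.
      move=> * /=; lra.
    have Hargc : is_argmin (pset X1 X2)
       (fun x => (fun _ : pvec n1 n2 => 0) x + 1 * (p1 (fst x) + p2 (snd x))) (xc1, xc2).
      split; first by split; [exact: proj1 hxc1 | exact: proj1 hxc2].
      move=> z [Hz1 Hz2] /=. have := proj2 hxc1 _ Hz1; have := proj2 hxc2 _ Hz2; lra.
    have Hgr := growth X1 X2 p1 p2 sigma1 sigma2 (fun _ => 0) 1 (xc1, xc2)
       hX1cv hX2cv hp1s hp2s HF0 Rle_0_1 Hargc xm Hxm.
    rewrite !vnorm_sq in Hgr.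
    change (fst (xc1, xc2)) with xc1 in Hgr, Hdesc.
    change (snd (xc1, xc2)) with xc2 in Hgr, Hdesc.
    rewrite hp1xc hp2xc in Hgr.
    set E1 := dot (vsub (fst xm) xc1) (vsub (fst xm) xc1) in Hgr, Hdesc.
    set E2 := dot (vsub (snd xm) xc2) (vsub (snd xm) xc2) in Hgr, Hdesc.
    have HE1 : 0 <= E1 by apply: dot_nonneg.
    have HE2 : 0 <= E2 by apply: dot_nonneg.
    have Hp : sigma1 / 2 * E1 + sigma2 / 2 * E2 <= p1 (fst xm) + p2 (snd xm) by lra.
    have Hp' := Rmult_le_compat_l (sqrt L) _ _ Hq Hp.
    have Q1 := Rmult_le_compat_r E1 _ _ HE1 (base_cond L (opnorm A1 ^ 2) sigma1 HL HN1 hsig1 HLN1).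
    have Q2 := Rmult_le_compat_r E2 _ _ HE2 (base_cond L (opnorm A2 ^ 2) sigma2 HL HN2 hsig2 HLN2).
    set rc := resid A1 A2 b (xc1, xc2) in Hdesc *.
    have Hsplit := lin_split A1 A2 b rc xm (xc1, xc2).
    change (fst (xc1, xc2)) with xc1 in Hsplit.
    change (snd (xc1, xc2)) with xc2 in Hsplit.
    have Hi := Rinv_nonneg (sqrt L) Hq.
    have Hrc := Rmult_le_pos _ _ Hi (dot_nonneg rc).
    rewrite /G /lagr hy0 /ystar_map dot_scale_l.
    change (cc 0) with 1.
    rewrite !Rinv_mult in Hdesc *.
    rewrite /Rdiv Rmult_1_l Rmult_1_r.
    rewrite /Rdiv in Q1 Q2.
    rewrite -/rc in Hsplit.
    have Hsplit2 := f_equal (Rmult (/ sqrt L)) Hsplit.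
    rewrite Rinv_1 Rmult_1_r -/rc. lra.
  - have Hta := tau_bounds k; have Hc := cc_pos k; have Htc := tau_cc k.
    have Eb' : beta2 L k.+1 = (1 - tau k) * (sqrt L * cc k) by rewrite beta2_eq /=; ring.
    have Ecc : sqrt L * cc k.+1 = (1 - tau k) * (sqrt L * cc k) by rewrite /=; ring.
    have HxS := hxS k; rewrite Eb' in HxS.
    have HyS := hyS k; rewrite Eb' in HyS.
    have Hxh := hxhat k.
    have Hpn : pset X1 X2 (xbar k.+1) by case: HxS => [[H1 _] [H2 _]]; split.
    split => //.
    have Hxs := hxs' k; have Hxt := hxs' k.+1.
    have Hxmp := proj1 Hxs; have Hxtp := proj1 Hxt.
    set ta := tau k in Hta Htc Eb' Ecc HxS HyS Hxh *.
    set be := sqrt L * cc k in Eb' Ecc HxS HyS IH *.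
    have Hbe : 0 <= be by rewrite /be; nra.
    have Hbe' : 0 <= (1 - ta) * be by nra.
    set xm := xs k in Hxh Hxs Hxmp IH *.
    set xt := xs k.+1 in Hxt Hxtp *.
    set xb := xbar k in Hxh Hpk IH *.
    set xh := xhat k in Hxh HxS HyS *.
    set u := padd (pscale (1 - ta) xb) (pscale (1 - (1 - ta)) xt).
    have Hu : pset X1 X2 u.
      case: Hpk => Hb1 Hb2; case: Hxtp => Ht1 Ht2.
      split; rewrite /u /padd /pscale /=; [apply: hX1cv|apply: hX2cv] => //; lra.
    have Hdesc := descent X1 X2 phi1 phi2 A1 A2 b xh ((1 - ta) * be) (xbar k.+1) u Hbe' HxS Hu.
    have V1 : vsub (fst u) (fst xh) = vscale ta (vsub (fst xt) (fst xm)).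
      apply: functional_extensionality => i.
      rewrite Hxh /u /padd /pscale /vsub /vadd /vscale /=; ring.
    have V2 : vsub (snd u) (snd xh) = vscale ta (vsub (snd xt) (snd xm)).
      apply: functional_extensionality => i.
      rewrite Hxh /u /padd /pscale /vsub /vadd /vscale /=; ring.
    rewrite V1 V2 !dot_scale2 in Hdesc.
    set rh := resid A1 A2 b xh in Hdesc *.
    set rt := resid A1 A2 b xt.
    set rs := resid A1 A2 b xm.
    set rb := resid A1 A2 b xb in IH.
    have Hlin : dot rh (mv A1 (vscale ta (vsub (fst xt) (fst xm)))) +
                dot rh (mv A2 (vscale ta (vsub (snd xt) (snd xm))))
                = ta * (dot rh rt - dot rh rs).
      rewrite -(lin_split A1 A2 b rh xt xm) Rmult_plus_distr_l /dot -!vsum_scal.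
      congr (_ + _); apply: vsum_ext => i; rewrite mv_scale; ring.
    set io := / ((1 - ta) * be).
    have Hlin2 := f_equal (Rmult io) Hlin.
    have Hphiu : phi phi1 phi2 u <= (1 - ta) * phi phi1 phi2 xb + (1 - (1 - ta)) * phi phi1 phi2 xt.
      have H1 := hphi1 (fst xb) (fst xt) (1 - ta) (ltac:(lra)).
      have H2 := hphi2 (snd xb) (snd xt) (1 - ta) (ltac:(lra)).
      rewrite /phi /u /padd /pscale /=; lra.
    have Hrh : forall i, rh i = (1 - ta) * rb i + ta * rs i.
      move=> i; rewrite /rh Hxh resid_comb //; ring.
    have Hid : dot rh rh - 2 * ta * dot rh rs = (1 - ta) ^ 2 * dot rb rb - ta ^ 2 * dot rs rs.
      rewrite /dot -!vsum_scal -!vsum_sub; apply: vsum_ext => i; rewrite !Hrh; ring.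
    have Hid2 := f_equal (Rmult (/ 2 * io)) Hid.
    have Hy : dot (ybar k.+1) rt = (1 - ta) * dot (ybar k) rt + ta * (io * dot rh rt).
      rewrite HyS /dot /vadd /vscale /ystar_map -/rh -!vsum_scal -vsum_add.
      apply: vsum_ext => i; rewrite /io /Rdiv /vscale; ring.
    have HFk : forall x z t, pset X1 X2 x -> pset X1 X2 z -> 0 <= t <= 1 ->
       lagr phi1 phi2 A1 A2 b (ybar k) (padd (pscale t x) (pscale (1 - t) z))
       <= t * lagr phi1 phi2 A1 A2 b (ybar k) x + (1 - t) * lagr phi1 phi2 A1 A2 b (ybar k) z.
      move=> x z t _ _ Ht; exact: lagr_convex.
    have Hgr := growth X1 X2 p1 p2 sigma1 sigma2 (lagr phi1 phi2 A1 A2 b (ybar k)) be xm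
       hX1cv hX2cv hp1s hp2s HFk Hbe Hxs xt Hxtp.
    rewrite !vnorm_sq in Hgr.
    set E1 := dot (vsub (fst xt) (fst xm)) (vsub (fst xt) (fst xm)) in Hgr Hdesc Hlin.
    set E2 := dot (vsub (snd xt) (snd xm)) (vsub (snd xt) (snd xm)) in Hgr Hdesc Hlin.
    have HE1 : 0 <= E1 by apply: dot_nonneg.
    have HE2 : 0 <= E2 by apply: dot_nonneg.
    have Q1 := Rmult_le_compat_r E1 _ _ HE1 (quad_cond L (opnorm A1 ^ 2) sigma1 ta (cc k) HL HN1 hsig1 HLN1 Hta Hc Htc).
    have Q2 := Rmult_le_compat_r E2 _ _ HE2 (quad_cond L (opnorm A2 ^ 2) sigma2 ta (cc k) HL HN2 hsig2 HLN2 Hta Hc Htc).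
    rewrite -/be -/io in Q1 Q2.
    have Hio : 0 <= io by apply: Rinv_nonneg.
    have Hib : / be = (1 - ta) * io.
      rewrite /io Rinv_mult -Rmult_assoc Rinv_r; [ring | apply: Rgt_not_eq; lra].
    rewrite /G in IH; rewrite Rinv_mult Hib in IH.
    have IH2 := Rmult_le_compat_l (1 - ta) _ _ (ltac:(lra)) IH.
    have Hgr2 := Rmult_le_compat_l (1 - ta) _ _ (ltac:(lra)) Hgr.
    have Hss : 0 <= io * (ta ^ 2 * dot rs rs).
      apply: Rmult_le_pos => //; apply: Rmult_le_pos; [nra| apply: dot_nonneg].
    rewrite /G Ecc.
    rewrite Rinv_mult -/io in Hdesc *.
    rewrite /lagr in IH2 Hgr2 *.
    rewrite Hy.
    rewrite /Rdiv in Q1 Q2.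
    rewrite -/be -/rs in IH2; rewrite -/rs -/rt in Hgr2.
    lra.
move=> k ystar Hys.
have [Hpk Hk] := EG k.
have Hc := cc_pos k.
have Hcl := cc_le k.
have HK : 0 < 499 / 1000 * INR k + 1 by have := pos_INR k; lra.
have Hbeta : 0 <= sqrt L * cc k by nra.
set r := resid A1 A2 b (xbar k) in Hk *.
have Hbb := dot_nonneg r.
have [[xd [Hxd Hxdv]] _] := hd (ybar k).
have Hg := (proj2 (hxs' k)) xd Hxd.
have HD1' := (proj2 hD1) _ (proj1 Hxd); have HD2' := (proj2 hD2) _ (proj2 Hxd).
have HD0 : 0 <= D1 + D2.
  have := (proj2 hD1) _ (proj1 hxc1); have := (proj2 hD2) _ (proj1 hxc2); lra.
have Hgd : G k (xs k) <= d (ybar k) + sqrt L * cc k * (D1 + D2).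
  rewrite /G in Hg *; rewrite Hxdv in Hg.
  have : sqrt L * cc k * (p1 (fst xd) + p2 (snd xd)) <= sqrt L * cc k * (D1 + D2).
    apply: Rmult_le_compat_l => //; lra.
  lra.
have Hpsi : 0 <= dot r r * / (2 * (sqrt L * cc k)).
  apply: Rmult_le_pos => //; apply: Rinv_nonneg; lra.
have Hbk : sqrt L * cc k <= sqrt L / (499 / 1000 * INR k + 1).
  rewrite /Rdiv; have -> : sqrt L * / (499 / 1000 * INR k + 1) = sqrt L * (1 / (499 / 1000 * INR k + 1)) by rewrite /Rdiv; ring.
  by apply: Rmult_le_compat_l.
have Hbk2 : sqrt L * cc k * (D1 + D2) <= sqrt L * (D1 + D2) / (499 / 1000 * INR k + 1).
  have := Rmult_le_compat_r (D1 + D2) _ _ HD0 Hbk.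
  by rewrite /Rdiv; have -> : sqrt L * (D1 + D2) * / (499 / 1000 * INR k + 1) = sqrt L * / (499 / 1000 * INR k + 1) * (D1 + D2) by ring.
split; first lra.
have Hdy := Hys (ybar k).
have Hdl := (proj2 (hd ystar)) _ Hpk.
rewrite /lagr -/r in Hdl.
have HCS := cauchy_schwarz ystar r.
have Hny : 0 <= vnorm ystar by apply: sqrt_pos.
have Hnr : 0 <= vnorm r by apply: sqrt_pos.
have Hs0 : 0 <= vnorm ystar + sqrt (vnorm ystar ^ 2 + 2 * (D1 + D2)).
  have := sqrt_pos (vnorm ystar ^ 2 + 2 * (D1 + D2)); lra.
case: (Rle_lt_or_eq_dec 0 L HL) => HL0.
- have Hb0 : 0 < sqrt L * cc k by apply: Rmult_lt_0_compat => //; apply: sqrt_lt_R0.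
  have Hmain : dot r r * / (2 * (sqrt L * cc k)) <= sqrt L * cc k * (D1 + D2) + vnorm ystar * vnorm r.
    lra.
  have Hmain2 : vnorm r * vnorm r <= 2 * ((sqrt L * cc k) * (sqrt L * cc k)) * (D1 + D2)
         + 2 * (sqrt L * cc k) * vnorm ystar * vnorm r.
    have E : vnorm r * vnorm r = dot r r * / (2 * (sqrt L * cc k)) * (2 * (sqrt L * cc k)).
      rewrite -vnorm_sq Rmult_assoc Rinv_l; [ring| apply: Rgt_not_eq; lra].
    rewrite E.
    have := Rmult_le_compat_r (2 * (sqrt L * cc k)) _ _ (ltac:(lra)) Hmain.
    lra.
  have := quad_solve (vnorm r) (sqrt L * cc k) (vnorm ystar) (D1 + D2) Hnr Hb0 Hny HD0 Hmain2.
  move=> Hf.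
  apply: (Rle_trans _ _ _ Hf).
  by apply: Rmult_le_compat_r.
- have E1 : opnorm A1 ^ 2 = 0 by rewrite -HL0 in HLN1; lra.
  have E2 : opnorm A2 ^ 2 = 0 by rewrite -HL0 in HLN2; lra.
  have [xsol [[Hsp Hsr] _]] := hsol.
  have Hr : r = (fun i => mv A1 (vsub (fst (xbar k)) (fst xsol)) i + mv A2 (vsub (snd (xbar k)) (snd xsol)) i).
    apply: functional_extensionality => i.
    rewrite -(resid_diff A1 A2 b) Hsr /r; ring.
  have Hbb0 : dot r r <= 0.
    rewrite Hr; apply: (Rle_trans _ _ _ (sq_sum2 _ _)).
    have := opnorm_bound A1 (vsub (fst (xbar k)) (fst xsol)).
    have := opnorm_bound A2 (vsub (snd (xbar k)) (snd xsol)).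
    rewrite E1 E2; lra.
  have -> : vnorm r = 0 by rewrite /vnorm (_ : dot r r = 0); [exact: sqrt_0| lra].
  rewrite -HL0 sqrt_0 /Rdiv Rmult_0_l Rmult_0_l; lra.
Qed.
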